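(* Let $F$ be a graph of diameter $2$, $n=|V(F)|$, $t=\delta(F)$, and let $l>n$ be an integer. Then $\delta_l\le n!\,C_{l-2}^{n-t-2}$.
   Context: All graphs are simple, finite, undirected. The $F$-degree of a vertex $v$ in $G$ is the number of subgraphs of $G$ (not necessarily induced) isomorphic to $F$ and containing $v$. $A_{2l-1}$ is the graph with vertex set $\{1,\dots,2l-1\}$ in which distinct $i,j$ are adjacent iff $|i-j|\le l-1$; $F_{2l}$ is obtained from $A_{2l-1}$ by adding a new vertex $2l$ joined exactly to $1,\dots,t$. $z_i$ is the $F$-degree of $i$ in $A_{2l-1}$, $f_i$ the $F$-degree of $i$ in $F_{2l}$, and $\delta_i=f_i-z_i$. $C_m^k=\frac{m!}{k!(m-k)!}$ for integers $m\ge k\ge 0$, and $C_m^k=0$ otherwise. *)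

(* Defs.v *)
From mathcomp Require Import all_boot.
Set Implicit Arguments. Unset Strict Implicit. Unset Printing Implicit Defensive.

Definition simple_graph (V : finType) (adj : rel V) : Prop :=
  symmetric adj /\ irreflexive adj.

Definition diam2 (V : finType) (adj : rel V) : Prop :=
  (forall u v : V, u != v -> adj u v \/ exists w, adj u w /\ adj w v) /\
  (exists u v : V, u != v /\ ~~ adj u v).

Definition mindeg (V : finType) (adj : rel V) : nat :=
  \big[minn/#|V|]_(v : V) #|[set w | adj v w]|.

(* (S, E) is a (not necessarily induced) subgraph of G = (T, adjG), with the
   edge set E stored as a symmetric set of ordered pairs, and it is isomorphic
   to F = (VF, adjF). *)
Definition is_copy (VF T : finType) (adjF : rel VF) (adjG : rel T)
    (S : {set T}) (E : {set T * T}) : bool :=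
  [forall x : T * T, (x \in E) ==>
      [&& x.1 \in S, x.2 \in S, adjG x.1 x.2 & ((x.2, x.1) \in E)]] &&
  [exists f : {ffun VF -> T},
      [&& injectiveb f, f @: setT == S &
          [forall i : VF, forall j : VF, adjF i j == ((f i, f j) \in E)]]].

Definition Fdeg (VF T : finType) (adjF : rel VF) (adjG : rel T) (v : T) : nat :=
  #|[set p : {set T} * {set (T * T)} | is_copy adjF adjG p.1 p.2 && (v \in p.1)]|.

(* Vertices are 0-indexed: ordinal i represents vertex i+1 of the paper. *)
Definition adjA (l : nat) : rel 'I_(2 * l - 1) :=
  fun i j => (i != j) && (i < j + l) && (j < i + l).

(* F_{2l}: A_{2l-1} plus the vertex 2l (ordinal 2l-1) joined to 1..t
   (ordinals 0..t-1). *)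
Definition adjFl (l t : nat) : rel 'I_(2 * l) :=
  fun i j =>
    if (i == 2 * l - 1 :> nat) then (j < t) && (j != 2 * l - 1 :> nat)
    else if (j == 2 * l - 1 :> nat) then i < t
    else (i != j) && (i < j + l) && (j < i + l).
Arguments adjA : clear implicits.
Arguments adjFl : clear implicits.

(* Main.v *)
Require Import Defs.
From mathcomp Require Import all_boot all_algebra.
From mathcomp Require Import zify.
Import GRing.Theory Num.Theory.
Set Implicit Arguments. Unset Strict Implicit. Unset Printing Implicit Defensive.


Section Copies.
Variables (VF : finType) (adjF : rel VF).

Lemma copyP (T : finType) (adjG : rel T) S E :
  is_copy adjF adjG S E ->
  exists f : {ffun VF -> T}, [/\ injective f, f @: setT = S,
     (forall i j, adjF i j = ((f i, f j) \in E)) &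
     (forall x, x \in E -> [&& x.1 \in S, x.2 \in S, adjG x.1 x.2 & ((x.2, x.1) \in E)])].
Proof.
case/andP => /forallP HE /existsP [f /and3P [/injectiveP finj /eqP fS /forallP fE]].
exists f; split => //.
- by move=> i j; apply/eqP; have /forallP := fE i; move/(_ j).
- by move=> x xE; have /implyP/(_ xE) := HE x.
Qed.

Lemma copy_edges (T : finType) S (E : {set T * T}) (f : {ffun VF -> T}) :
  f @: setT = S -> (forall i j, adjF i j = ((f i, f j) \in E)) ->
  (forall x, x \in E -> (x.1 \in S) && (x.2 \in S)) ->
  E = [set x | [exists i, exists j, adjF i j && (x == (f i, f j))]].
Proof.
move=> fS fE HE; apply/setP => x; rewrite inE; apply/idP/existsP.
- move=> xE; have /andP[] := HE x xE; rewrite -fS => /imsetP [i _ e1] /imsetP [j _ e2].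
  exists i; apply/existsP; exists j; rewrite fE -e1 -e2 -surjective_pairing xE.
  by rewrite eqxx.
- by case=> i /existsP [j /andP [aij /eqP ->]]; rewrite -fE.
Qed.

Section Lift.
Variables (T1 T2 : finType) (h : T1 -> T2) (hinj : injective h)
  (a1 : rel T1) (a2 : rel T2) (ha : forall x y, a2 (h x) (h y) = a1 x y) (x0 : T1).
Definition hinv (y : T2) : T1 := odflt x0 [pick x | h x == y].
Lemma hinvK y : y \in codom h -> h (hinv y) = y.
Proof.
move=> /codomP [x ->]; rewrite /hinv; case: pickP => [z /eqP //| /(_ x)].
by rewrite eqxx.
Qed.
Definition hp (x : T1 * T1) : T2 * T2 := (h x.1, h x.2).

Lemma lift_copy S E : is_copy adjF a2 S E -> S \subset codom h ->
  is_copy adjF a1 (h @^-1: S) (hp @^-1: E) /\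
  (h @: (h @^-1: S), hp @: (hp @^-1: E)) = (S, E).
Proof.
move=> cp /subsetP Sh.
have [f [finj fS fE HE]] := copyP cp.
have fiS i : f i \in S by rewrite -fS imset_f.
pose f1 := [ffun i => hinv (f i)].
have hf1 i : h (f1 i) = f i by rewrite ffunE hinvK // Sh.
split; last first.
  congr pair; apply/setP => y; apply/imsetP/idP.
  - by case=> x; rewrite inE => xS ->.
  - move=> yS; move: (Sh _ yS) => /codomP [x ex]; exists x => //; by rewrite inE -ex.
  - by case=> x; rewrite inE => xS ->.
  - move=> yE; have /and4P[y1 y2 _ _] := HE y yE.
    exists (hinv y.1, hinv y.2); last by rewrite /hp /= !hinvK ?Sh // -surjective_pairing.
    by rewrite inE /hp /= !hinvK ?Sh // -surjective_pairing.
apply/andP; split.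
  apply/forallP => x; apply/implyP; rewrite !inE /hp => xE.
  by have /and4P[-> -> ] := HE _ xE; rewrite ha /= => -> ->.
apply/existsP; exists f1; apply/and3P; split.
- apply/injectiveP => i j e; apply: finj; by rewrite -!hf1 e.
- apply/eqP/setP => x; rewrite inE; apply/imsetP/idP.
  + by case=> i _ ->; rewrite hf1.
  + rewrite -fS => /imsetP [i _ e]; exists i => //; apply: hinj; by rewrite hf1.
- apply/forallP => i; apply/forallP => j; by rewrite inE /hp /= !hf1 fE.
Qed.
End Lift.
End Copies.

Lemma bigmin_le (I : eqType) (s : seq I) (F : I -> nat) x0 v :
  v \in s -> \big[minn/x0]_(i <- s) F i <= F v.
Proof.
elim: s => // a s IH; rewrite in_cons big_cons => /orP[/eqP->|vs].
  exact: geq_minl.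
exact: leq_trans (geq_minr _ _) (IH vs).
Qed.

Lemma deg_ge (V : finType) (adj : rel V) v : mindeg adj <= #|[set w | adj v w]|.
Proof. exact: bigmin_le (mem_index_enum v). Qed.

Lemma adj_widen l t : l > 0 -> forall x y : 'I_(2 * l - 1),
  adjFl l t (widen_ord (leq_subr 1 (2*l)) x) (widen_ord (leq_subr 1 (2*l)) y) = adjA l x y.
Proof.
by move=> l0 x y; rewrite /adjFl /adjA /= !ltn_eqF //.
Qed.

Lemma main_nat (VF : finType) (adjF : rel VF) (l : nat)
    (vA : 'I_(2 * l - 1)) (vF : 'I_(2 * l)) :
  simple_graph adjF -> diam2 adjF ->
  (#|VF| < l)%N ->
  nat_of_ord vA = (l - 1)%N -> nat_of_ord vF = (l - 1)%N ->
  Fdeg adjF (adjFl l (mindeg adjF)) vF <=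
  Fdeg adjF (adjA l) vA + (#|VF|)`! * 'C(l - 2, #|VF| - mindeg adjF - 2).
Proof.
move=> [symF irrF] [diamF [u0 [v0 [uv0 nuv0]]]] nl vAv vFv.
set n := #|VF|. set t := mindeg adjF.
have n2 : 2 <= n.
  by have := max_card (mem [set u0; v0]); rewrite cards2 uv0.
have l3 : 3 <= l by lia.
have tle : t <= n - 1.
  apply: leq_trans (deg_ge adjF u0) _.
  have -> : n - 1 = #|[set~ u0]| by rewrite cardsC1; lia.
  apply: subset_leq_card; apply/subsetP => x; rewrite !inE.
  by apply: contraTneq => ->; rewrite irrF.
have tge : 1 <= t.
  rewrite /t /mindeg; apply: (big_ind (fun x => 1 <= x)) => //.
  - by lia.
  - by move=> x y hx hy; rewrite leq_min hx hy.
  move=> v _; apply/card_gt0P.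
  have [v' nv] : exists v', v != v'.
    case: (eqVneq v u0) => [->|nv]; [by exists v0 | by exists u0].
  case: (diamF v v' nv) => [a|[x [a _]]]; by [exists v'; rewrite inE | exists x; rewrite inE].
pose w : 'I_(2 * l) := insubd vF (2 * l - 1).
have valw : nat_of_ord w = 2 * l - 1 by rewrite /w val_insubd; case: ifP => //; lia.
set m := vF.
have mw : m != w by apply/eqP => /(congr1 (@nat_of_ord _)); rewrite vFv valw; lia.
set PF := [set p : {set 'I_(2 * l)} * {set 'I_(2 * l) * 'I_(2 * l)} |
            is_copy adjF (adjFl l t) p.1 p.2 && (vF \in p.1)].
set P1 := [set p : {set 'I_(2 * l)} * {set 'I_(2 * l) * 'I_(2 * l)} |
            is_copy adjF (adjFl l t) p.1 p.2 && (vF \in p.1) && (w \notin p.1)].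
set P2 := [set p : {set 'I_(2 * l)} * {set 'I_(2 * l) * 'I_(2 * l)} |
            is_copy adjF (adjFl l t) p.1 p.2 && (vF \in p.1) && (w \in p.1)].
have h1 : #|PF| <= #|P1| + #|P2|.
  apply: leq_trans (leq_card_setU P1 P2).
  apply: subset_leq_card; apply/subsetP => p; rewrite !inE.
  by case: (w \in p.1); rewrite ?andbT ?andbF ?orbF.
have h2 : #|P1| <= Fdeg adjF (adjA l) vA.
  pose h := widen_ord (leq_subr 1 (2*l)).
  have hinj : injective h by move=> x y /(congr1 (@nat_of_ord _)) /= e; apply: val_inj.
  have ha : forall x y, adjFl l t (h x) (h y) = adjA l x y.
    by move=> x y; apply: adj_widen; lia.
  pose g (q : {set 'I_(2 * l - 1)} * {set 'I_(2 * l - 1) * 'I_(2 * l - 1)}) :=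
    (h @: q.1, hp h @: q.2).
  apply: leq_trans (leq_imset_card g _).
  apply: subset_leq_card; apply/subsetP => -[S E]; rewrite !inE /= => /andP[/andP[cp mS] wS].
  have Sh : S \subset codom h.
    apply/subsetP => y yS; have yw : y != w by apply: contraNneq wS => <-.
    have yl : nat_of_ord y < 2 * l - 1.
      have := ltn_ord y; have : nat_of_ord y != 2 * l - 1.
        by apply: contra yw => /eqP e; apply/eqP/val_inj; rewrite /= e valw.
      lia.
    by apply/codomP; exists (Ordinal yl); apply: val_inj.
  have [cp' eq'] := lift_copy hinj ha vA cp Sh.
  apply/imsetP; exists (h @^-1: S, hp h @^-1: E); last by rewrite /g /= eq'.
  rewrite inE /= cp' inE.
  have -> : h vA = m by apply: val_inj; rewrite /= vAv vFv.
  by [].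
have h3 : #|P2| <= n`! * 'C(l - 2, n - t - 2).
  pose Kt := [set y : 'I_(2 * l) | nat_of_ord y < t].
  have cardKt : #|Kt| = t.
    pose kt (k : 'I_t) : 'I_(2 * l) := insubd vF (nat_of_ord k).
    have vkt k : nat_of_ord (kt k) = k.
      by rewrite /kt val_insubd; case: ifP => //; have := ltn_ord k; lia.
    have -> : Kt = kt @: setT.
      apply/setP => y; rewrite inE; apply/idP/imsetP.
      - move=> yt; exists (Ordinal yt) => //; apply: val_inj; by rewrite /= vkt.
      - by case=> k _ ->; rewrite vkt.
    rewrite card_imset ?cardsT ?card_ord //.
    by move=> a b /(congr1 (@nat_of_ord _)); rewrite !vkt => e; apply: val_inj.
  pose R := [set y : 'I_(2 * l) | (t <= nat_of_ord y) && (nat_of_ord y <= t + l - 2) && (y != m)].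
  have cardR : #|R| <= l - 2.
    pose gR (k : 'I_(l - 2)) : 'I_(2 * l) :=
      insubd vF (if t + k < l - 1 then t + k else t + k + 1).
    have vgR k : nat_of_ord (gR k) = if t + k < l - 1 then t + k else t + k + 1.
      rewrite /gR val_insubd; have := ltn_ord k; case: ifP; case: ifP => //; lia.
    apply: (@leq_trans #|gR @: setT|); last by rewrite -[X in _ <= X]card_ord -cardsT leq_imset_card.
    apply: subset_leq_card; apply/subsetP => y; rewrite inE => /andP[/andP[ty yl] ym].
    have ym' : nat_of_ord y != l - 1.
      by apply: contra ym => /eqP e; apply/eqP/val_inj; rewrite /= e vFv.
    case: (ltnP (nat_of_ord y) (l - 1)) => ylm.
      have kl : nat_of_ord y - t < l - 2 by lia.
      apply/imsetP; exists (Ordinal kl) => //; apply: val_inj; rewrite /= vgR /=.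
      case: ifP; lia.
    have kl : nat_of_ord y - t - 1 < l - 2 by lia.
    apply/imsetP; exists (Ordinal kl) => //; apply: val_inj; rewrite /= vgR /=.
    case: ifP; lia.
  pose K := Kt :|: [set w; m].
  have cardK : #|K| = t + 2.
    rewrite cardsU cardKt cards2 eq_sym mw.
    have -> : Kt :&: [set w; m] = set0.
      apply/setP => y; rewrite !inE; apply/negbTE/negP => /andP[yt /orP[] /eqP e];
      move: yt; rewrite e ?valw ?vFv; lia.
    by rewrite cards0; lia.
  pose Good := [set S : {set 'I_(2 * l)} | (#|S| == n) && (K \subset S) && (S \subset K :|: R)].
  have cardGood : #|Good| <= 'C(l - 2, n - t - 2).
    pose dK (S : {set 'I_(2 * l)}) := S :\: K.
    rewrite -(@card_in_imset _ _ dK); last first.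
      move=> S1 S2; rewrite !inE => /andP[/andP[_ KS1] _] /andP[/andP[_ KS2] _] e.
      have eqU (S : {set 'I_(2 * l)}) : K \subset S -> S = (S :\: K) :|: K.
        move=> KS; apply/setP => x; rewrite in_setU in_setD.
        case xK: (x \in K) => /=; last by rewrite orbF.
        by rewrite (subsetP KS).
      by rewrite (eqU _ KS1) (eqU _ KS2) -/(dK S1) e.
    apply: (@leq_trans 'C(#|R|, n - t - 2)); last exact: leq_bin2l.
    rewrite -cards_draws; apply: subset_leq_card; apply/subsetP => X.
    case/imsetP => S; rewrite inE => /andP[/andP[/eqP cS KS] SKR] ->.
    rewrite inE; apply/andP; split.
      apply/subsetP => x; rewrite in_setD => /andP[xK xS].
      by move: (subsetP SKR x xS); rewrite in_setU (negbTE xK).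
    by rewrite cardsD (setIidPr KS) cS cardK; apply/eqP; lia.
  pose InjF := [set s : {ffun VF -> 'I_n} | injectiveb s].
  have cardInj : #|InjF| = n`!.
    by rewrite card_inj_ffuns card_ord ffactnn.
  pose Phi (q : {set 'I_(2 * l)} * {ffun VF -> 'I_n}) :=
    (q.1, [set x | [exists i, exists j, adjF i j &&
       (x == (nth m (enum q.1) (q.2 i), nth m (enum q.1) (q.2 j)))]]).
  have P2sub : P2 \subset Phi @: setX Good InjF.
    apply/subsetP => -[S E]; rewrite !inE /= => /andP[/andP[cp mS] wS].
    have [f [finj fS fE HE]] := copyP cp.
    have fiS i : f i \in S by rewrite -fS imset_f.
    have : w \in f @: setT by rewrite fS.
    case/imsetP => i0 _ wf.
    have adjw y : adjFl l t w y -> nat_of_ord y < t.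
      by rewrite /adjFl valw eqxx => /andP[].
    have Eadj i j : adjF i j -> adjFl l t (f i) (f j).
      by rewrite fE => /HE /and4P[].
    have fnw j : j != i0 -> nat_of_ord (f j) != 2 * l - 1.
      move=> nj; apply: contra nj => /eqP e; apply/eqP/finj.
      by rewrite -wf; apply: val_inj; rewrite /= e valw.
    pose Nb := [set j | adjF i0 j].
    have fN : f @: Nb \subset Kt.
      apply/subsetP => y /imsetP [j]; rewrite inE => aj ->.
      by rewrite inE; apply: adjw; rewrite wf; apply: Eadj.
    have KtS : Kt \subset S.
      have : f @: Nb == Kt.
        by rewrite eqEcard fN card_imset // cardKt deg_ge.
      move/eqP <-; rewrite -fS; apply: imsetS; exact: subsetT.
    have bound y : y \in S -> (y == w) || (nat_of_ord y <= t + l - 2).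
      rewrite -fS => /imsetP [j _ ->].
      case: (eqVneq j i0) => [->|nj]; first by rewrite -wf eqxx.
      apply/orP; right.
      have nj' : i0 != j by rewrite eq_sym.
      case: (diamF i0 j nj') => [a|[k [a1 a2]]].
      - by have := Eadj _ _ a; rewrite -wf => /adjw; lia.
      - have fk : nat_of_ord (f k) < t by have := Eadj _ _ a1; rewrite -wf => /adjw.
        have hk : (nat_of_ord (f k) == 2 * l - 1) = false.
          apply/negbTE/eqP => e; move: fk tle nl l3; rewrite e; clear; lia.
        have hj : (nat_of_ord (f j) == 2 * l - 1) = false by apply/negbTE; exact: fnw.
        have := Eadj _ _ a2; rewrite /adjFl hk hj => /andP[/andP[_ _] lt].
        move: fk lt; clear; lia.
    have SG : S \in Good.
      rewrite inE; apply/andP; split; first (apply/andP; split).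
      - by rewrite -fS card_imset // cardsT.
      - rewrite subUset KtS /=; apply/subsetP => y; rewrite !inE.
        by case/orP => /eqP ->.
      - apply/subsetP => y yS; move: (bound y yS); rewrite !inE.
        case: (y == w); rewrite ?orbT //= => yb.
        case: (ltnP (nat_of_ord y) t) => yt //=.
        by case: (eqVneq y m) => ym; rewrite ?yb.
    pose u := enum_rank u0.
    pose sg := [ffun i => insubd u (index (f i) (enum S)) : 'I_n].
    have vsg i : nat_of_ord (sg i) = index (f i) (enum S).
      have ilt : index (f i) (enum S) < n.
        have : index (f i) (enum S) < size (enum S) by rewrite index_mem mem_enum fiS.
        by rewrite -cardE -fS card_imset // cardsT.
      by rewrite ffunE val_insubd; case: ifP => //; rewrite ilt.
    have hn i : nth m (enum S) (sg i) = f i.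
      by rewrite vsg nth_index // mem_enum.
    apply/imsetP; exists (S, sg).
      rewrite in_setX SG inE /=; apply/injectiveP => i j e.
      apply: finj; have := congr1 (@nat_of_ord _) e; rewrite !vsg.
      by move/index_inj => H; apply: (H (f i)); rewrite mem_enum.
    rewrite /Phi /=; congr pair.
    rewrite (copy_edges fS fE); last by move=> x /HE /and4P[-> ->].
    apply/setP => x; rewrite !inE; apply: eq_existsb => i; apply: eq_existsb => j.
    by rewrite !hn.
  apply: leq_trans (subset_leq_card P2sub) _.
  apply: leq_trans (leq_imset_card _ _) _.
  by rewrite cardsX cardInj mulnC leq_mul2l cardGood orbT.
have -> : Fdeg adjF (adjFl l t) vF = #|PF| by [].
lia.
Qed.

Local Open Scope ring_scope.

Theorem lemma7 (VF : finType) (adjF : rel VF) (l : nat)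
    (vA : 'I_(2 * l - 1)) (vF : 'I_(2 * l)) :
  simple_graph adjF -> diam2 adjF ->
  (#|VF| < l)%N ->
  nat_of_ord vA = (l - 1)%N -> nat_of_ord vF = (l - 1)%N ->
  (Fdeg adjF (adjFl l (mindeg adjF)) vF)%:Z - (Fdeg adjF (adjA l) vA)%:Z
    <= ((#|VF|)`! * 'C(l - 2, #|VF| - mindeg adjF - 2))%:Z.
Proof.
move=> H1 H2 H3 H4 H5.
by rewrite lerBlDl -PoszD lez_nat; apply: main_nat.
Qed.
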